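(* Let $P$ be a probability measure on $(\Omega,\mathcal A)$, let $\delta\in(\tfrac12,1)$, and let $\bar{\mathbf C}_1,\bar{\mathbf C}_2\subseteq\bar{\mathcal A}$ be C-classes. If $\bar T(P,\delta)\subseteq\bar{\mathbf C}_1\cap\bar{\mathbf C}_2$, then $\bar{\mathbf C}_1\sim\bar{\mathbf C}_2$, i.e. $\bar M_{\bar{\mathbf C}_1}=\bar M_{\bar{\mathbf C}_2}$.
   Context: Let $(\Omega,\mathcal A)$ be a measurable space. For $n\ge1$, $\mathcal A^n$ is the product $\sigma$-algebra on $\Omega^n$; the extended event space is $\bar{\mathcal A}=\bigcup_{n\ge1}\mathcal A^n$, events tagged by their level $n$ (written $A^{(n)}$). For $k\ge1$, $(\Omega^n)^k$ is identified with $\Omega^{nk}$ and $(\mathcal A^n)^k$ with $\mathcal A^{nk}$. For a probability measure $P$ on $\mathcal A$, $P^n$ is its $n$-fold product, $\bar P(A^{(n)})=P^n(A^{(n)})$, and $\bar T(P,\delta)=\{A\in\bar{\mathcal A}:\bar P(A)\ge\delta\}$. For $A^{(n)}\in\mathcal A^n$, an interval $I\subseteq[0,1]$ and $k\in\mathbb N^+$, $S(A^{(n)},I,k)=\{(\omega_1,\dots,\omega_k)\in(\Omega^n)^k:\frac1k\sum_{i=1}^k\chi_{A^{(n)}}(\omega_i)\in I\}$. A class $\bar{\mathbf C}\subseteq\bar{\mathcal A}$ is a C-class if for every $n$ the component $\mathcal C^{(n)}=\bar{\mathbf C}\cap\mathcal A^n$ satisfies: $\Omega^n\in\mathcal C^{(n)}$;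 closed under supersets within $\mathcal A^n$; contains no two disjoint events. ''$S(A,I,k)\in\bar{\mathbf C}$ definitively'' means there is $k_0$ with $S(A,I,k)\in\bar{\mathbf C}$ for all $k>k_0$. The C-measure of a C-class is $\bar M_{\bar{\mathbf C}}(A)=\sup\{\sigma\in[0,1]: S(A,[\sigma,1],k)\in\bar{\mathbf C}\text{ definitively}\}$. Two C-classes are equivalent, $\bar{\mathbf C}_1\sim\bar{\mathbf C}_2$, if $\bar M_{\bar{\mathbf C}_1}=\bar M_{\bar{\mathbf C}_2}$. *)

(* Defs.v *)
From HB Require Import structures.
From mathcomp Require Import all_boot all_order all_algebra.
From mathcomp Require Import all_classical all_reals all_analysis.
Set Implicit Arguments. Unset Strict Implicit. Unset Printing Implicit Defensive.
Import Order.TTheory GRing.Theory Num.Theory.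
Local Open Scope classical_set_scope.
Local Open Scope ring_scope.

(* Omega^n is represented by n.-tuple T, which carries (in mathcomp-analysis)
   the product sigma-algebra generated by the coordinate projections.
   A class of extended events is a level-indexed family
   C : forall n, set (set (n.-tuple T)); only levels n >= 1 are meaningful. *)

Section Defs.
Context {d : measure_display} {T : measurableType d} {R : realType}.

Fixpoint prodP (P : probability T R) (n : nat) : set (n.-tuple T) -> \bar R :=
  match n with
  | 0 => fun A => (\1_A ([tuple] : 0.-tuple T))%:E
  | m.+1 => fun A => (\int[P]_x @prodP P m [set t : m.-tuple T | A (cons_tuple x t)])%E
  end.

Definition Tbar (P : probability T R) (delta : R) (n : nat)
  : set (set (n.-tuple T)) :=
  [set A | measurable A /\ (delta%:E <= @prodP P n A)%E].

Lemma block_lt (n k : nat) (i : 'I_k) (j : 'I_n) : (i * n + j < n * k)%N.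
Proof.
case: i j => i /= Hi [j /= Hj].
have H : (i.+1 * n <= k * n)%N by rewrite leq_mul2r Hi orbT.
rewrite [(n * k)%N]mulnC; apply: leq_trans H.
by rewrite mulSn [(n + _)%N]addnC ltn_add2l.
Qed.

(* identification (Omega^n)^k = Omega^(nk): the i-th block of w *)
Definition block (n k : nat) (w : (n * k).-tuple T) (i : 'I_k) : n.-tuple T :=
  [tuple tnth w (Ordinal (block_lt i j)) | j < n].

Definition Sset (n : nat) (A : set (n.-tuple T)) (I : interval R) (k : nat)
  : set ((n * k).-tuple T) :=
  [set w | ((\sum_(i < k) \1_A (block w i)) / k%:R) \in I].

Definition CClass (C : forall n : nat, set (set (n.-tuple T))) : Prop :=
  forall n : nat, (0 < n)%N ->
    [/\ (forall A, C n A -> measurable A),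
        C n setT,
        (forall A B, C n A -> measurable B -> A `<=` B -> C n B) &
        (forall A B, C n A -> C n B -> A `&` B !=set0)].

Definition definitively_in (C : forall n : nat, set (set (n.-tuple T)))
  (n : nat) (A : set (n.-tuple T)) (I : interval R) : Prop :=
  exists k0 : nat, forall k : nat, (k0 < k)%N -> C (n * k)%N (@Sset n A I k).

Definition Cmeasure (C : forall n : nat, set (set (n.-tuple T)))
  (n : nat) (A : set (n.-tuple T)) : R :=
  sup [set s : R | 0 <= s <= 1 /\ @definitively_in C n A `[s, 1]].

Definition Cequiv (C1 C2 : forall n : nat, set (set (n.-tuple T))) : Prop :=
  forall n : nat, (0 < n)%N -> forall A : set (n.-tuple T), measurable A ->
    @Cmeasure C1 n A = @Cmeasure C2 n A.

End Defs.

(* Main.v *)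
Require Import Defs.
From HB Require Import structures.
From mathcomp Require Import all_boot all_order all_algebra.
From mathcomp Require Import all_classical all_reals all_analysis.
From mathcomp Require Import measurable_realfun.
From mathcomp Require Import lra.
Import Order.TTheory GRing.Theory Num.Theory.
Local Open Scope classical_set_scope.
Local Open Scope ring_scope.
Section Helpers.
Context {d : measure_display} {T : measurableType d} {R : realType}.
Variable P : probability T R.
Local Open Scope ereal_scope.

Fixpoint E (n : nat) : (n.-tuple T -> \bar R) -> \bar R :=
  match n with
  | 0 => fun f => f [tuple]
  | m.+1 => fun f => \int[P]_x E m (fun t => f (cons_tuple x t))
  end.

Lemma prodP_E n (A : set (n.-tuple T)) :
  @prodP d T R P n A = E n (fun t => (\1_A t)%:E).
Proof.
elim: n A => [//|n IH] A /=.
apply: eq_integral => x _; rewrite IH; congr (E n _); apply: funext => t.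

Qed.

Lemma E_tcast a b (e : a = b) (h : b.-tuple T -> \bar R) :
  E b h = E a (fun w => h (tcast e w)).
Proof. by case: b / e h => h; congr (E a _); apply: funext => w; rewrite tcast_id. Qed.

Lemma E_split a b (h : (a + b).-tuple T -> \bar R) :
  E (a + b) h = E a (fun u => E b (fun v => h [tuple of u ++ v])).
Proof.
elim: a h => [|a IH] h.
  rewrite /=; congr (E b _); apply: funext => v; congr h; exact: val_inj.
change (\int[P]_x E (a + b) (fun t => h (cons_tuple x t)) =
  \int[P]_x E a (fun t => E b (fun v => h [tuple of cons_tuple x t ++ v]))).
apply: eq_integral => x _; rewrite IH; congr (E a _); apply: funext => u.
congr (E b _); apply: funext => v; congr h; exact: val_inj.
Qed.

End Helpers.
Section Helpers2.
Context {d : measure_display} {T : measurableType d} {R : realType}.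
Variable P : probability T R.
Local Open Scope ereal_scope.
Local Notation E := (@E d T R P).

Lemma E_ge0 n (f : n.-tuple T -> \bar R) : (forall t, 0 <= f t) -> 0 <= E n f.
Proof.
elim: n f => [|n IH] f f0 /=; first exact: f0.
by apply: integral_ge0 => x _; apply: IH.
Qed.

Lemma E_meas n : forall dS (S : measurableType dS) (f : S -> n.-tuple T -> \bar R),
  measurable_fun setT (fun p : S * n.-tuple T => f p.1 p.2) ->
  (forall s t, 0 <= f s t) -> measurable_fun setT (fun s => E n (f s)).
Proof.
elim: n => [|n IH] dS S f mf f0 /=.
  exact: (measurableT_comp mf (pair2_measurable _)).
pose G := fun p : S * T => E n (fun t => f p.1 (cons_tuple p.2 t)).
have mG : measurable_fun setT G.
  apply: (IH _ _ (fun p t => f p.1 (cons_tuple p.2 t))) => //.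
  pose g := fun q : (S * T) * n.-tuple T => (q.1.1, cons_tuple q.1.2 q.2).
  apply: (measurableT_comp (g := g) mf).
  apply: measurable_fun_pair => /=.
    exact: (measurableT_comp measurable_fst measurable_fst).
  apply: measurable_cons.
    exact: (measurableT_comp measurable_snd measurable_fst).
  exact: measurable_snd.
have G0 : forall p, 0 <= G p by move=> p; apply: E_ge0.
have := @measurable_fun_fubini_tonelli_F _ _ S T R P G mG G0.
by [].
Qed.

Lemma E_meas1 n (f : n.+1.-tuple T -> \bar R) :
  measurable_fun setT f -> (forall t, 0 <= f t) ->
  measurable_fun setT (fun x => E n (fun t => f (cons_tuple x t))).
Proof.
move=> mf f0; apply: (@E_meas n _ _ (fun x t => f (cons_tuple x t))) => //.
apply: (measurableT_comp (g := fun q : T * n.-tuple T => cons_tuple q.1 q.2) mf).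
exact: measurable_cons.
Qed.

Lemma E_add n (f g : n.-tuple T -> \bar R) :
  measurable_fun setT f -> measurable_fun setT g ->
  (forall t, 0 <= f t) -> (forall t, 0 <= g t) ->
  E n (fun t => f t + g t) = E n f + E n g.
Proof.
elim: n f g => [//|n IH] f g mf mg f0 g0 /=.
rewrite -ge0_integralD //; last 4 first.
- by move=> x _; apply: E_ge0.
- exact: E_meas1.
- by move=> x _; apply: E_ge0.
- exact: E_meas1.
apply: eq_integral => x _; apply: IH => //.
- by apply: (measurableT_comp (g := fun t : n.-tuple T => cons_tuple x t) mf); apply: measurable_cons.
- by apply: (measurableT_comp (g := fun t : n.-tuple T => cons_tuple x t) mg); apply: measurable_cons.
Qed.

Lemma E_scale n (c : R) (f : n.-tuple T -> \bar R) :
  (0 <= c)%R -> measurable_fun setT f -> (forall t, 0 <= f t) ->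
  E n (fun t => c%:E * f t) = c%:E * E n f.
Proof.
elim: n f => [//|n IH] f c0 mf f0 /=.
rewrite -ge0_integralZl_EFin //; last exact: E_meas1.
  2: by move=> x _; apply: E_ge0.
apply: eq_integral => x _; apply: IH => //.
by apply: (measurableT_comp (g := fun t : n.-tuple T => cons_tuple x t) mf); apply: measurable_cons.
Qed.

Lemma E_cst n (c : \bar R) : E n (fun _ => c) = c.
Proof.
elim: n => [//|n IH] /=.
under eq_integral do rewrite IH.
rewrite integral_cst //; transitivity (c * 1); last exact: mule1.
congr (_ * _); exact: probability_setT.
Qed.

Lemma E_le n (f g : n.-tuple T -> \bar R) :
  measurable_fun setT f -> measurable_fun setT g ->
  (forall t, 0 <= f t) -> (forall t, f t <= g t) -> E n f <= E n g.
Proof.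
elim: n f g => [|n IH] f g mf mg f0 fg /=; first exact: fg.
apply: ge0_le_integral => //.
- by move=> x _; apply: E_ge0.
- exact: E_meas1.
- by apply: E_meas1 => // t; apply: le_trans (fg t).
move=> x _; apply: IH => //.
- by apply: (measurableT_comp (g := fun t : n.-tuple T => cons_tuple x t) mf); apply: measurable_cons.
- by apply: (measurableT_comp (g := fun t : n.-tuple T => cons_tuple x t) mg); apply: measurable_cons.
Qed.

End Helpers2.
Section Count.
Context {d : measure_display} {T : measurableType d} {R : realType}.
Variable P : probability T R.
Local Notation E := (@E d T R P).
Variables (n : nat) (A : set (n.-tuple T)).
Hypothesis mA : measurable A.

Definition cnt k (w : (n * k).-tuple T) : R := \sum_(i < k) \1_A (block w i).

Lemma measurable_block k (i : 'I_k) :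
  measurable_fun setT (fun w : (n * k).-tuple T => block w i).
Proof.
apply/measurable_fun_tnthP => j /=.
rewrite (_ : _ \o _ = fun w => tnth w (Ordinal (block_lt i j))).
  exact: measurable_tnth.
by apply: funext => w /=; rewrite /block tnth_mktuple.
Qed.

Lemma mcnt k : measurable_fun setT (@cnt k).
Proof.
rewrite /cnt; apply: measurable_sum => i /=.
exact: (measurableT_comp (measurable_indic mA) (measurable_block _ i)).
Qed.

Lemma cnt_ge0 k w : 0 <= @cnt k w.
Proof. by apply: sumr_ge0 => i _; rewrite indicE. Qed.

Lemma cnt_le k w : @cnt k w <= k%:R.
Proof.
rewrite /cnt -[k in k%:R]card_ord -sum1_card natr_sum.
by apply: ler_sum => i _; rewrite indicE; case: (_ \in _).
Qed.

Definition tcat k (u : n.-tuple T) (v : (n * k).-tuple T) : (n * k.+1).-tuple T :=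
  tcast (esym (mulnS n k)) [tuple of u ++ v].

Lemma block_cat0 k u v : block (@tcat k u v) ord0 = u.
Proof.
apply: eq_from_tnth => j; rewrite /block tnth_mktuple /tcat tcastE.
rewrite (_ : cast_ord _ _ = lshift (n * k) j); first exact: tnth_lshift.
by apply: val_inj => /=; rewrite mul0n add0n.
Qed.

Lemma block_catS k u v (i : 'I_k) : block (@tcat k u v) (lift ord0 i) = block v i.
Proof.
apply: eq_from_tnth => j; rewrite /block !tnth_mktuple /tcat tcastE.
rewrite (_ : cast_ord _ _ = rshift n (Ordinal (block_lt i j))); first exact: tnth_rshift.
by apply: val_inj => /=; rewrite /bump /= add1n mulSn addnA.
Qed.

Lemma cnt_cat k u v : @cnt k.+1 (@tcat k u v) = \1_A u + @cnt k v.
Proof.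
rewrite /cnt big_ord_recl block_cat0; congr (_ + _).
by apply: eq_bigr => i _; rewrite block_catS.
Qed.

Local Open Scope ereal_scope.

Lemma mgf (p L : R) k : (0 <= p)%R -> (0 <= L)%R -> E n (fun t => (\1_A t)%:E) = p%:E ->
  E (n * k) (fun w => (expR (L * @cnt k w))%:E) =
  (((1 + (expR L - 1) * p) ^+ k)%R)%:E.
Proof.
move=> p0 L0 hp; elim: k => [|k IH].
  rewrite expr0 -[RHS](E_cst P (n * 0)); congr (E _ _); apply: funext => w.
  by rewrite /cnt big_ord0 mulr0 expR0.
rewrite (E_tcast P _ _ (esym (mulnS n k))) E_split.
have mex : measurable_fun setT (fun w : (n * k).-tuple T => (expR (L * @cnt k w))%:E).
  apply/measurable_EFinP.
  exact: (measurableT_comp (@measurable_expR R) (measurable_funM (measurable_cst L) (mcnt k))).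
have mexA : measurable_fun setT (fun u : n.-tuple T => (expR (L * \1_A u))%:E).
  apply/measurable_EFinP.
  exact: (measurableT_comp (@measurable_expR R) (measurable_funM (measurable_cst L) (measurable_indic mA))).
have -> : (fun u : n.-tuple T => E (n * k) (fun v =>
    (expR (L * @cnt k.+1 (tcast (esym (mulnS n k)) [tuple of u ++ v])))%:E)) =
    (fun u => (((1 + (expR L - 1) * p) ^+ k)%R)%:E * (expR (L * \1_A u))%:E).
  apply: funext => u.
  rewrite (_ : (fun v => _) = (fun v => (expR (L * \1_A u))%:E * (expR (L * @cnt k v))%:E)).
    by rewrite E_scale // IH muleC.
  apply: funext => v; rewrite (_ : tcast _ _ = @tcat k u v) // cnt_cat.
  by rewrite mulrDr expRD EFinM.
have eL : (0 <= expR L - 1)%R by rewrite subr_ge0; apply: le_trans (expR_ge1Dx L); rewrite lerDl.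
rewrite E_scale //; last first.
  by apply: exprn_ge0; rewrite addr_ge0 // mulr_ge0.
rewrite (_ : (fun u => _) = (fun u => (fun=> 1%E) u + (expR L - 1)%:E * (\1_A u)%:E)).
  rewrite E_add //; try (apply: emeasurable_funM => //; apply/measurable_EFinP; exact: measurable_indic);
    try (by move=> u; rewrite mule_ge0 // lee_fin).
  rewrite E_scale //; try (by apply/measurable_EFinP; exact: measurable_indic);
    try (by move=> u; rewrite lee_fin).
  by rewrite E_cst hp -EFinM exprSr.
apply: funext => u; rewrite /= -EFinM -EFinD; congr EFin.
by rewrite indicE; case: (u \in A); rewrite ?mulr1 ?mulr0 ?expR0 ?addr0 // addrC subrK.
Qed.

Local Close Scope ereal_scope.

Definition Bset k (tau : R) : set ((n * k).-tuple T) :=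
  [set w | tau * k%:R <= @cnt k w].

Lemma mBset k tau : measurable (Bset k tau).
Proof.
have := mcnt k measurableT _ (measurable_itv `[tau * k%:R, +oo[).
rewrite setTI; congr measurable; apply/seteqP; split => w /=;
  by rewrite in_itv /= andbT.
Qed.

Local Open Scope ereal_scope.

Lemma chern (p L tau : R) k : (0 <= p)%R -> (0 <= L)%R ->
  E n (fun t => (\1_A t)%:E) = p%:E ->
  E (n * k) (fun w => (\1_(Bset k tau) w)%:E) <=
  (((expR (- (L * tau)) * (1 + (expR L - 1) * p)) ^+ k)%R)%:E.
Proof.
move=> p0 L0 hp.
have mex : measurable_fun setT (fun w : (n * k).-tuple T => (expR (L * @cnt k w))%:E).
  apply/measurable_EFinP.
  exact: (measurableT_comp (@measurable_expR R) (measurable_funM (measurable_cst L) (mcnt k))).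
apply: le_trans (@E_le _ _ _ P (n * k) _ (fun w => (expR (- (L * tau) * k%:R))%:E *
   (expR (L * @cnt k w))%:E) _ _ _ _) _.
- by apply/measurable_EFinP; apply: measurable_indic; exact: mBset.
- exact: emeasurable_funM.
- by move=> w; rewrite lee_fin indicE.
- move=> w; rewrite -EFinM lee_fin -expRD indicE.
  case: (boolP (w \in Bset k tau)) => [|_]; last by rewrite expR_ge0.
  rewrite inE /Bset /= => hw.
  apply: le_trans (expR_ge1Dx _); rewrite lerDl.
  by rewrite mulNr -mulrA addrC subr_ge0 ler_wpM2l.
rewrite E_scale //; try exact: expR_ge0; try (by move=> w; rewrite lee_fin expR_ge0).
by rewrite (mgf _ _ _ p0 L0 hp) -EFinM exprMn expRM_natr.
Qed.

Lemma decay (q tau eps : R) : (0 <= q)%R -> (q < tau)%R -> (q <= 1)%R -> (0 < eps)%R ->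
  E n (fun t => (\1_A t)%:E) = q%:E ->
  exists k0, forall k, (k0 <= k)%N ->
    E (n * k) (fun w => (\1_(Bset k tau) w)%:E) <= eps%:E.
Proof.
move=> q0 qt q1 e0 hq.
pose s := ((tau - q) / 2)%R.
have s0 : (0 < s)%R by rewrite /s divr_gt0 // subr_gt0.
have s1 : (0 < 1 + s)%R by rewrite addr_gt0.
pose L := ln (1 + s).
have eL : expR L = (1 + s)%R by rewrite /L lnK // posrE.
have eL1 : (expR L - 1 = s)%R by rewrite eL; lra.
have L0 : (0 <= L)%R by rewrite /L ln_ge0 // lerDl ltW.
have Lge : (1 - (1 + s)^-1 <= L)%R.
  have := expR_ge1Dx (- L); rewrite expRN eL; lra.
pose rho := (expR (- (L * tau)) * (1 + (expR L - 1) * q))%R.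
have rho0 : (0 <= rho)%R.
  by rewrite /rho mulr_ge0 ?expR_ge0 // addr_ge0 // eL1 mulr_ge0 // ltW.
have rho1 : (rho < 1)%R.
  rewrite /rho expRN eL1 mulrC ltr_pdivrMr ?expR_gt0 // mul1r.
  apply: lt_le_trans (expR_ge1Dx _).
  have tau0 : (0 < tau)%R by apply: le_lt_trans qt.
  have hinv : ((1 + s)^-1 * (1 + s) = 1)%R by rewrite mulVf // gt_eqF.
  have h2 : (q * (1 + s) < tau)%R.
    rewrite /s; nra.
  have h4 : ((1 - (1 + s)^-1) * (1 + s) = s)%R.
    by rewrite mulrBl hinv mul1r; lra.
  have h5 : ((1 - (1 + s)^-1) * (1 + s) * tau = s * tau)%R by rewrite h4.
  have h3 : (s * q < (1 - (1 + s)^-1) * tau)%R by nra.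
  have : ((1 - (1 + s)^-1) * tau <= L * tau)%R by rewrite ler_wpM2r // ltW.
  lra.
have := @cvg_expr R rho; rewrite ger0_norm // => /(_ rho1) hc.
have [N _ HN] := cvgr_lt _ hc _ e0.
exists N => k Nk; apply: le_trans (chern q L tau k q0 L0 hq) _.
by rewrite lee_fin ltW //; apply: HN.
Qed.

End Count.
Section Final.
Context {d : measure_display} {T : measurableType d} {R : realType}.
Variable P : probability T R.
Local Notation E := (@E d T R P).
Local Open Scope ereal_scope.

Lemma indic_meas m (B : set (m.-tuple T)) : measurable B ->
  measurable_fun setT (fun t => (\1_B t : R)%:E).
Proof. by move=> mB; apply/measurable_EFinP; exact: measurable_indic. Qed.

Lemma compl_E m (B : set (m.-tuple T)) : measurable B ->
  E m (fun t => (\1_B t)%:E) + E m (fun t => (\1_(~` B) t)%:E) = 1.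
Proof.
move=> mB; rewrite -E_add //; try exact: indic_meas;
  try (by apply: indic_meas; exact: measurableC);
  try (by move=> t; rewrite lee_fin indicE).
rewrite -[RHS](E_cst P m); congr (E m _); apply: funext => t.
rewrite -EFinD !indicE in_setC; congr EFin.
by case: (t \in B) => /=; rewrite ?addr0 ?add0r.
Qed.

Lemma E_indic_le m (B1 B2 : set (m.-tuple T)) : measurable B1 -> measurable B2 ->
  B1 `<=` B2 -> E m (fun t => (\1_B1 t)%:E) <= E m (fun t => (\1_B2 t)%:E).
Proof.
move=> m1 m2 B12; apply: E_le; try exact: indic_meas.
- by move=> t; rewrite lee_fin indicE.
move=> t; rewrite lee_fin !indicE.
case: (boolP (t \in B1)) => // /[dup] h1; rewrite inE => /B12 h2.
by rewrite (_ : t \in B2) // inE.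
Qed.

Lemma E_indic_le1 m (B : set (m.-tuple T)) : measurable B ->
  E m (fun t => (\1_B t)%:E) <= 1.
Proof.
move=> mB; rewrite -[leRHS](E_cst P m); apply: E_le => //; try exact: indic_meas;
  try (by move=> t; rewrite lee_fin indicE);
  by move=> t; rewrite lee_fin indicE; case: (_ \in _).
Qed.

Local Close Scope ereal_scope.

Lemma Sset_Bset n (A : set (n.-tuple T)) k s : (0 < k)%N ->
  @Sset _ _ R n A `[s, 1] k = Bset n A k s.
Proof.
move=> k0; have kp : (0 < k%:R :> R) by rewrite ltr0n.
apply/seteqP; split => w; rewrite /Sset /Bset /= in_itv /=.
- by move=> /andP[h _]; rewrite -ler_pdivlMr.
move=> h; apply/andP; split; first by rewrite ler_pdivlMr.
rewrite ler_pdivrMr // mul1r; exact: (cnt_le n A k w).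
Qed.

Lemma cnt_compl n (A : set (n.-tuple T)) k w :
  @cnt _ _ R n (~` A) k w = k%:R - cnt n A k w.
Proof.
rewrite /cnt -[k in k%:R]card_ord -sum1_card natr_sum -sumrB.
by apply: eq_bigr => i _; rewrite !indicE in_setC; case: (_ \in _) => /=; rewrite ?subr0 ?subrr.
Qed.

Lemma Bset_compl n (A : set (n.-tuple T)) k s :
  ~` @Bset _ _ R n A k s `<=` Bset n (~` A) k (1 - s).
Proof.
move=> w; rewrite /Bset /= => /negP; rewrite -ltNge => h.
rewrite cnt_compl mulrBl mul1r lerD2l lerN2; exact: ltW.
Qed.

End Final.
Section Main.
Context {d : measure_display} {T : measurableType d} {R : realType}.
Variable P : probability T R.
Local Notation E := (@E d T R P).

Lemma ext_aux (a b : \bar R) (x : R) : (0 <= b)%E -> (a + b = 1)%E ->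
  (b <= (1 - x)%:E)%E -> (x%:E <= a)%E.
Proof.
case: a => [a| |]; case: b => [b| |] //= b0.
- by case=> h; rewrite !lee_fin => hb; lra.
Qed.

Lemma Cmeasure_val (delta : R) (C : forall n : nat, set (set (n.-tuple T)))
  n (A : set (n.-tuple T)) (p : R) :
  1 / 2 < delta < 1 -> CClass C ->
  (forall m, (0 < m)%N -> @Tbar _ _ _ P delta m `<=` C m) ->
  (0 < n)%N -> measurable A -> @prodP _ _ _ P n A = p%:E -> Cmeasure C A = p.
Proof.
move=> /andP[d1 d2] hC hT n0 mA hp.
have hE : E n (fun t => (\1_A t)%:E) = p%:E by rewrite -prodP_E.
have p0 : 0 <= p by rewrite -lee_fin -hE; apply: E_ge0 => t; rewrite lee_fin indicE.
have p1 : p <= 1 by rewrite -lee_fin -hE; exact: E_indic_le1.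
have hEc : E n (fun t => (\1_(~` A) t)%:E) = (1 - p)%:E.
  have h := compl_E P _ _ mA; rewrite hE in h.
  by rewrite EFinB -h (addeC p%:E) addeK.
have ed : 0 < 1 - delta by rewrite subr_gt0.
pose X := [set s : R | 0 <= s <= 1 /\ definitively_in C A `[s, 1]].
have Xin : forall s, 0 <= s -> s < p -> X s.
  move=> s s0 sp; split; first by rewrite s0 /=; apply: ltW; apply: lt_le_trans p1.
  have [k0 hk0] := decay P _ _ (measurableC mA) (1 - p) (1 - s)
    (1 - delta) ltac:(lra) ltac:(lra) ltac:(lra) ed hEc.
  exists k0 => k kk; have k0' : (0 < k)%N by apply: leq_ltn_trans kk.
  rewrite Sset_Bset //; apply: (hT (n * k)); first by rewrite muln_gt0 n0.
  split; first by apply: mBset.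
  rewrite prodP_E; apply: (ext_aux _ (E (n * k) (fun t => (\1_(~` Bset n A k s) t)%:E))).
  - by apply: E_ge0 => t; rewrite lee_fin indicE.
  - by apply: compl_E; by apply: mBset.
  apply: le_trans (hk0 k (ltnW kk)).
  apply: E_indic_le; last exact: Bset_compl.
  - by apply: measurableC; apply: mBset.
  - by apply: mBset; apply: measurableC.
have Xout : forall s, X s -> s <= p.
  move=> s [_ [k0 hk0]]; rewrite leNgt; apply/negP => ps.
  have [k1 hk1] := decay P _ _ mA p s (1 - delta) p0 ps p1 ed hE.
  pose k := (maxn k0 k1).+1.
  have kk0 : (k0 < k)%N by rewrite ltnS leq_maxl.
  have kk1 : (k1 <= k)%N by rewrite leqW // leq_maxr.
  have hS := hk0 k kk0; rewrite Sset_Bset // in hS.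
  have nk0 : (0 < n * k)%N by rewrite muln_gt0 n0.
  have hSc : C (n * k)%N (~` Bset n A k s).
    apply: (hT (n * k)%N nk0); split; first by apply: measurableC; by apply: mBset.
    rewrite prodP_E; apply: (ext_aux _ (E (n * k) (fun t => (\1_(Bset n A k s) t)%:E))).
    - by apply: E_ge0 => t; rewrite lee_fin indicE.
    - by rewrite addeC; apply: compl_E; by apply: mBset.
    exact: hk1.
  have [_ _ _ hdis] := hC (n * k)%N nk0.
  by have [w [hw1 hw2]] := hdis _ _ hS hSc.
have X0 : X 0.
  split; first by rewrite lexx ler01.
  exists 0%N => k kk; rewrite Sset_Bset //.
  have [_ hT' _ _] := hC (n * k)%N ltac:(by rewrite muln_gt0 n0).
  rewrite (_ : Bset n A k 0 = setT) //.
  apply/seteqP; split => w // _; rewrite /Bset /= mul0r; exact: cnt_ge0.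
have Xne : X !=set0 by exists 0.
have Xub : ubound X p by move=> s; exact: Xout.
rewrite /Cmeasure -/X; apply/eqP; rewrite eq_le; apply/andP; split.
  exact: ge_sup.
rewrite leNgt; apply/negP => hlt.
have hs : has_sup X by split => //; exists p.
have sup0 : 0 <= sup X by exact: sup_upper_bound hs _ X0.
have Xx : X ((sup X + p) / 2) by apply: Xin; lra.
have h := sup_upper_bound hs; have := h _ Xx; lra.
Qed.

End Main.

Theorem mainTheorem7 (d : measure_display) (T : measurableType d)
  (R : realType) (P : probability T R) (delta : R)
  (C1 C2 : forall n : nat, set (set (n.-tuple T))) :
  1 / 2 < delta < 1 ->
  @CClass d T C1 -> @CClass d T C2 ->
  (forall n : nat, (0 < n)%N -> @Tbar d T R P delta n `<=` C1 n `&` C2 n) ->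
  @Cequiv d T R C1 C2.
Proof.
move=> hd h1 h2 HT n n0 A mA.
have hE := prodP_E P n A.
have pfin : @prodP _ _ _ P n A \is a fin_num.
  rewrite ge0_fin_numE; last by rewrite hE; apply: E_ge0 => t; rewrite lee_fin indicE.
  by rewrite hE; apply: (le_lt_trans (E_indic_le1 P _ _ mA)); exact: ltey.
rewrite (Cmeasure_val P _ _ _ _ _ hd h1 _ n0 mA (esym (fineK pfin))); last first.
  by move=> m m0 B /(HT m m0) [].
rewrite (Cmeasure_val P _ _ _ _ _ hd h2 _ n0 mA (esym (fineK pfin))) //.
by move=> m m0 B /(HT m m0) [].
Qed.
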